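(* Let $n\ge 2$ and $\beta\in B_n$. Let $\hat\beta_n$ be the $(n-1)\times(n-1)$ matrix obtained from $\psi_n(\beta)$ by deleting its $n$-th row and $n$-th column. Then in $\Lambda=\mathbb{Z}[t^{\pm1}]$, $$(t^{-n}-1)\det(\hat\beta_n-I_{n-1})=(t^{-1}-1)\det(\psi_n^r(\beta)-I_{n-1}).$$
   Context: $\psi_n\colon B_n\to\mathrm{GL}_n(\Lambda)$ is the unreduced Burau representation: $\psi_n(\sigma_i)=I_{i-1}\oplus U\oplus I_{n-i-1}$ with $U=\left(\begin{smallmatrix}1-t&t\\1&0\end{smallmatrix}\right)$. Let $C_n=\sum_{1\le i\le j\le n}E_{i,j}$ be the upper triangular $n\times n$ matrix with all entries on and above the diagonal equal to $1$. For every $\beta\in B_n$ one has $C_n^{-1}\psi_n(\beta)C_n=\left(\begin{smallmatrix}\psi_n^r(\beta)&0_{n-1}\\ *_\beta&1\end{smallmatrix}\right)$ with $0_{n-1}$ a zero column, $*_\beta$ a row of length $n-1$, and $\psi_n^r(\beta)\in\mathrm{GL}_{n-1}(\Lambda)$; the map $\psi_n^r$ is the reduced Burau representation. $I_k$ is the $k\times k$ identity matrix. *)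

(* Defs.v *)
From HB Require Import structures.
From mathcomp Require Import all_boot all_order all_algebra.
Set Implicit Arguments. Unset Strict Implicit. Unset Printing Implicit Defensive.
Import GRing.Theory.
Local Open Scope ring_scope.

(* Burau representation over an arbitrary commutative ring R with a unit t.
   Lambda = Z[t^{+-1}] is the universal such ring. *)

(* psi_n(sigma_{i+1}) = I_i (+) U (+) I_{n-i-2}, with U = [[1-t, t],[1, 0]];
   indices are 0-based: the generator sigma_{i+1} acts on rows/cols i, i+1. *)
Definition burau_gen (R : comUnitRingType) (t : R) (n i : nat) : 'M[R]_n :=
  \matrix_(j, k)
    if (j == i :> nat) && (k == i :> nat) then 1 - t
    else if (j == i :> nat) && (k == i.+1 :> nat) then t
    else if (j == i.+1 :> nat) && (k == i :> nat) then 1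
    else if (j == i.+1 :> nat) && (k == i.+1 :> nat) then 0
    else (j == k)%:R.

(* A braid in B_n is given by a word in the Artin generators sigma_1..sigma_{n-1}:
   a letter (i, true) is sigma_{i+1}, (i, false) is sigma_{i+1}^{-1}. *)
Definition braid_word (n : nat) := seq ('I_n.-1 * bool).

Definition burau (R : comUnitRingType) (t : R) (n : nat) (w : braid_word n)
  : 'M[R]_n :=
  foldr (fun (l : 'I_n.-1 * bool) M => (if l.2 then burau_gen t n l.1
                     else invmx (burau_gen t n l.1)) *m M) 1%:M w.

Definition Cmx (R : comUnitRingType) (n : nat) : 'M[R]_n :=
  \matrix_(i, j) ((i <= j)%N)%:R.

Definition upleft (R : Type) (n : nat) (M : 'M[R]_n) : 'M[R]_(n.-1) :=
  \matrix_(i, j) M (widen_ord (leq_pred n) i) (widen_ord (leq_pred n) j).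

Definition burau_red (R : comUnitRingType) (t : R) (n : nat) (w : braid_word n)
  : 'M[R]_(n.-1) :=
  upleft (invmx (Cmx R n) *m burau t w *m Cmx R n).

(* Main.v *)
Require Import Defs.
From HB Require Import structures.
From mathcomp Require Import all_boot all_order all_algebra.
Import GRing.Theory.
Local Open Scope ring_scope.

Section S.
Variable R : comUnitRingType.
Variable m : nat.
Local Notation wd := (widen_ord (leqnSn m)).

Lemma upleftE (M : 'M[R]_m.+1) : upleft M = \matrix_(i, j) M (wd i) (wd j).
Proof. by apply/matrixP => i j; rewrite !mxE; congr (M _ _); apply: val_inj. Qed.

Definition lastc (X : 'M[R]_m.+1) : 'cV[R]_m := \col_i X (wd i) ord_max.
Definition lastr (X : 'M[R]_m.+1) : 'rV[R]_m := \row_j X ord_max (wd j).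

Lemma upleft_mul (X Y : 'M[R]_m.+1) :
  upleft (X *m Y) = upleft X *m upleft Y + lastc X *m lastr Y.
Proof.
rewrite !upleftE; apply/matrixP => i j; rewrite !mxE big_ord_recr /=.
congr (_ + _); first by apply: eq_bigr => k _; rewrite !mxE.
by rewrite big_ord1 !mxE.
Qed.

Lemma upleftB1 (X : 'M[R]_m.+1) : upleft (X - 1%:M) = upleft X - 1%:M.
Proof.
rewrite !upleftE; apply/matrixP => i j; rewrite !mxE.
by [].
Qed.

Lemma det1_rank1 (u : 'cV[R]_m) (w : 'rV[R]_m) :
  \det (1%:M + u *m w) = 1 + (w *m u) 0 0.
Proof.
pose M' := block_mx (1%:M : 'M_m) u (- w) (1%:M : 'M_1).
have e1 : block_mx 1%:M 0 w 1%:M *m M' = block_mx 1%:M u 0 (1%:M + w *m u).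
  by rewrite mulmx_block !mul1mx !mul0mx !addr0 mulmx1 addrN addrC.
have e2 : M' = block_mx (1%:M + u *m w) u 0 1%:M *m block_mx 1%:M 0 (- w) 1%:M.
  rewrite mulmx_block !mulmx1 !mulmx0 ?mul0mx !mul1mx ?add0r ?addr0 mulmxN.
  by rewrite addrK.
have := congr1 determinant e1; rewrite det_mulmx det_lblock det_ublock !det1 !mul1r.
rewrite e2 det_mulmx det_lblock det_ublock !det1 !mulr1 => ->.
by rewrite det_mx11 !mxE.
Qed.
End S.

Section S2.
Variable R : comUnitRingType.
Variable t : R.
Variable n : nat.
Definition vt : 'rV[R]_n := \row_k t ^+ k.

Lemma sum_delta (P : pred 'I_n) (k : 'I_n) :
  \sum_(j | P j) t ^+ j * (j == k)%:R = if P k then t ^+ k else 0.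
Proof.
case: ifP => Pk.
  rewrite (bigD1 k) //= eqxx mulr1 big1 ?addr0 // => j /andP[_ /negbTE->].
  by rewrite mulr0.
by rewrite big1 // => j Pj; case: eqP => [ejk|]; [rewrite ejk Pk in Pj|rewrite mulr0].
Qed.

Lemma vt_gen (i : nat) : (i.+1 < n)%N -> vt *m burau_gen t n i = vt.
Proof.
move=> lt; have lt0 : (i < n)%N by apply: ltnW.
pose i0 := Ordinal lt0; pose i1 := Ordinal lt.
apply/rowP => k; rewrite !mxE.
rewrite (bigD1 i0) // (bigD1 i1) /=; last by rewrite -val_eqE /= neq_ltn ltnSn orbT.
rewrite !mxE /= eqSS (gtn_eqF (ltnSn i)) (ltn_eqF (ltnSn i)) eqxx /=.
rewrite (eq_bigr (fun j : 'I_n => t ^+ j * (j == k)%:R)); last first.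
  move=> j /andP[]; rewrite -!val_eqE /= => h0 h1.
  by rewrite !mxE (negbTE h0) (negbTE h1).
rewrite sum_delta /= -!val_eqE /=.
have [->|nki] := eqVneq (k : nat) i.
  by rewrite /= mulr1 addr0 exprS mulrBr mulr1 [t * _]mulrC subrK.
have [->|nki1] := eqVneq (k : nat) i.+1.
  by rewrite /= mulr0 !addr0 exprS mulrC.
by rewrite /= !mulr0 !add0r.
Qed.
End S2.

Lemma alg (R : comUnitRingType) (t : R) (m : nat) : t \is a GRing.unit ->
  t ^- m.+1 - 1 = (t^-1 - 1) * (1 + \sum_(k < m) t ^+ k * (t ^+ m)^-1).
Proof.
move=> ut; have utm : t ^+ m \is a GRing.unit by rewrite unitrX.
have utm1 : t ^+ m.+1 \is a GRing.unit by rewrite unitrX.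
apply: (mulrI utm1); rewrite mulrBr divrr // mulr1.
set X := (1 + _).
rewrite exprSr -mulrA (mulrA t) mulrBr mulr1 mulrV // mulrCA.
rewrite /X.
rewrite mulrDr mulr1 mulr_sumr.
rewrite (eq_bigr (fun k : 'I_m => t ^+ k)); last first.
  by move=> k _; rewrite mulrCA divrr // mulr1.
have e : t ^+ m + \sum_(k < m) t ^+ k = \sum_(k < m.+1) t ^+ k by rewrite big_ord_recr addrC.
rewrite e -exprSr -opprB subrX1 -mulNr opprB.
by congr (_ * _); apply: eq_bigr.
Qed.

Lemma det_Cmx (R : comUnitRingType) k : \det (Cmx R k) = 1.
Proof.
rewrite -det_tr det_trig; last first.
  apply/is_trig_mxP => i j lt; rewrite !mxE.
  by rewrite leqNgt lt.
by rewrite big1 // => i _; rewrite !mxE leqnn.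
Qed.

Lemma vt_burau (R : comUnitRingType) (t : R) n (w : braid_word n) :
  @vt R t n *m burau t w = @vt R t n.
Proof.
elim: w => [|l w IH] /=; first by rewrite mulmx1.
have lt : (l.1.+1 < n)%N.
  by have := ltn_ord l.1; case: n l w IH => [|n'] [[i ?] b] //=.
have hG := @vt_gen R t n _ lt.
rewrite mulmxA; case: (l.2); first by rewrite hG IH.
case: (boolP (burau_gen t n l.1 \in unitmx)) => uG.
  by rewrite -{1}hG mulmxK // IH.
by rewrite invmx_out ?inE // hG IH.
Qed.

Theorem lemma2 (R : comUnitRingType) (t : R) (n : nat) (w : braid_word n) :
  t \is a GRing.unit -> (2 <= n)%N ->
  (t ^- n - 1) * \det (upleft (burau t w) - 1%:M)
  = (t^-1 - 1) * \det (burau_red t w - 1%:M).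
Proof.
move=> ut; case: n w => [|m] w // _.
have utm : t ^+ m \is a GRing.unit by rewrite unitrX.
set B := burau t w; set C := Cmx R m.+1.
have uC : C \in unitmx by rewrite unitmxE det_Cmx unitr1.
have [A eqA] : exists A, B - 1%:M = A by eexists.
have vA : @vt R t m.+1 *m A = 0 by rewrite -eqA mulmxBr mulmx1 /B vt_burau subrr.
pose wv : 'rV[R]_m := \row_k (t ^+ k / t ^+ m).
have upE := @upleftE R m.
have lastrA : @lastr R m A = - (wv *m upleft A).
  apply/rowP => j.
  have := congr1 (fun M : 'M[R]_(1, m.+1) => M 0 (widen_ord (leqnSn m) j)) vA.
  rewrite /= !mxE big_ord_recr /= !mxE => /eqP; rewrite addrC addr_eq0 => /eqP h; rewrite /= in h.
  rewrite -(mulKr utm (A _ _)) h mulrN mulr_sumr; congr (- _).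
  apply: eq_bigr => k _; rewrite upE !mxE mulrCA mulrA; congr (_ * _).
have lastrC : @lastr R m C = 0.
  by apply/rowP => j; rewrite !mxE /= leqNgt ltn_ord.
have lastrCZ (Z : 'M[R]_m.+1) : @lastr R m (C *m Z) = @lastr R m Z.
  apply/rowP => j; rewrite !mxE big_ord_recr /= !mxE leqnn mul1r big1 ?add0r //.
  by move=> k _; rewrite !mxE /= leqNgt ltn_ord mul0r.
have upC : \det (upleft C) = 1.
  by rewrite -(det_Cmx R m); congr (\det _); apply/matrixP => i j; rewrite upE !mxE.
pose Z := invmx C *m A.
have e1 : burau_red t w - 1%:M = upleft (Z *m C).
  rewrite /burau_red -upleftB1 /Z -eqA mulmxBr mulmx1 mulmxBl mulVmx //.
have e2 : upleft A = upleft C *m upleft Z + @lastc R m C *m @lastr R m Z.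
  by rewrite -upleft_mul /Z mulKVmx.
have e3 : @lastr R m Z = - (wv *m upleft A).
  by rewrite -lastrA /Z -lastrCZ mulKVmx.
have e4 : (1%:M + @lastc R m C *m wv) *m upleft A = upleft C *m upleft Z.
  by rewrite mulmxDl mul1mx {1}e2 e3 mulmxN mulmxA subrK.
have e5 : \det (upleft (Z *m C)) = \det (upleft Z).
  by rewrite upleft_mul lastrC mulmx0 addr0 det_mulmx upC mulr1.
rewrite e1 e5 -[upleft B - 1%:M]upleftB1 eqA.
have := congr1 determinant e4; rewrite !det_mulmx upC mul1r det1_rank1 => <-.
rewrite mulrA (@alg R t m ut); congr (_ * (1 + _) * _).
rewrite !mxE; apply: eq_bigr => k _; rewrite !mxE /= leq_eqVlt ltn_ord orbT mulr1.
done.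
Qed.
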